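(* Let $n\ge m$ and let $\ell,N,p,q\in\mathbb{N}$. Let $\mathcal{S}=\{x\in\mathbb{R}^n : Fx\le\mathbf{1}_p\}$ be a C-polytope with $F\in\mathbb{R}^{p\times n}$ of full column rank and vertices $x_1,\dots,x_N$, and let $\mathscr{U}=\{u\in\mathbb{R}^m: Hu\le\mathbf{1}_q\}$ be a C-polytope with $H\in\mathbb{R}^{q\times m}$ of full column rank. Let $\delta\in\mathbb{R}^\ell$ be given, with associated matrices $A(\delta)\in\mathbb{R}^{n\times n}$, $B(\delta)\in\mathbb{R}^{n\times m}$. Set $G=\begin{bmatrix}H\\ FB(\delta)\end{bmatrix}\in\mathbb{R}^{(q+p)\times m}$ and, for each vertex $x_i$, $l^{(i)}=\begin{bmatrix}\mathbf{1}_q\\ \mathbf{1}_p-FA(\delta)x_i\end{bmatrix}\in\mathbb{R}^{q+p}$. Then the set $$\mathcal{L}_\delta=\{(C_1,\dots,C_N,d_1,\dots,d_N): C_i\in\mathbb{R}^{m\times\ell},\ d_i\in\mathbb{R}^m,\ C_i\delta+d_i\in\mathscr{U},\ A(\delta)x_i+B(\delta)(C_i\delta+d_i)\in\mathcal{S}\ \forall i\}$$ is nonempty if and only if, for every $i\in\{1,\dots,N\}$, there exist index sets $\mathcal{Q}\subset\{1,\dots,q\}$ and $\mathcal{P}\subset\{1,\dots,p\}$ such that the submatrix $G_{\mathcal{Q}\cup\mathcal{P}}\in\mathbb{R}^{m\times m}$ formed by rows $\mathcal{Q}$ of $H$ and rows $\mathcal{P}$ of $FB(\delta)$ is invertible and,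 with $l^{(i)}_{\mathcal{Q}\cup\mathcal{P}}$ the corresponding subvector of $l^{(i)}$, $$(H)_k\,G_{\mathcal{Q}\cup\mathcal{P}}^{-1}\,l^{(i)}_{\mathcal{Q}\cup\mathcal{P}}\le 1\quad\forall k\in\{1,\dots,q\}\setminus\mathcal{Q},$$ $$(FB(\delta))_k\,G_{\mathcal{Q}\cup\mathcal{P}}^{-1}\,l^{(i)}_{\mathcal{Q}\cup\mathcal{P}}\le 1-(FA(\delta)x_i)_k\quad\forall k\in\{1,\dots,p\}\setminus\mathcal{P}.$$
   Context: A C-polytope is a convex bounded polyhedron containing the origin in its interior. $(P)_k$ denotes the $k$-th row of a matrix $P$; for an index set $\mathcal{I}$, $P_{\mathcal{I}}$ (resp. $y_{\mathcal{I}}$) denotes the submatrix (subvector) of rows (entries) with indices in $\mathcal{I}$. $\mathbf{1}_p$ is the all-ones vector in $\mathbb{R}^p$. *)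

(* Defs.v *)
From HB Require Import structures.
From mathcomp Require Import all_boot all_order all_algebra.
From mathcomp Require Import reals.
Set Implicit Arguments. Unset Strict Implicit. Unset Printing Implicit Defensive.
Import Order.TTheory GRing.Theory Num.Theory.
Local Open Scope ring_scope.

Definition le_vec (R : realType) (k : nat) (x y : 'cV[R]_k) : Prop :=
  forall i, x i 0 <= y i 0.

Definition polyset (R : realType) (p n : nat) (F : 'M[R]_(p, n)) (x : 'cV[R]_n) : Prop :=
  le_vec (F *m x) (const_mx 1).

Definition bounded_set (R : realType) (n : nat) (S : 'cV[R]_n -> Prop) : Prop :=
  exists M : R, forall x, S x -> forall i, `|x i 0| <= M.

Definition origin_interior (R : realType) (n : nat) (S : 'cV[R]_n -> Prop) : Prop :=
  exists eps : R, 0 < eps /\ forall x : 'cV[R]_n, (forall i, `|x i 0| < eps) -> S x.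

(* C-polytope: convex (automatic for polyhedra, stated for completeness),
   bounded, containing the origin in its interior. *)
Definition convex_set (R : realType) (n : nat) (S : 'cV[R]_n -> Prop) : Prop :=
  forall x y (t : R), S x -> S y -> 0 <= t <= 1 -> S (t *: x + (1 - t) *: y).

Definition C_polytope (R : realType) (n : nat) (S : 'cV[R]_n -> Prop) : Prop :=
  [/\ convex_set S, bounded_set S & origin_interior S].

Definition is_vertex (R : realType) (n : nat) (S : 'cV[R]_n -> Prop) (x : 'cV[R]_n) : Prop :=
  S x /\ forall y z (t : R), S y -> S z -> 0 < t < 1 -> x = t *: y + (1 - t) *: z -> y = z.

(* Submatrix consisting of the rows with indices in the index set I
   (taken in increasing order). *)
Definition rowset_mx (R : Type) (k c : nat) (I : {set 'I_k}) (M : 'M[R]_(k, c))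
  : 'M[R]_(#|I|, c) := \matrix_(i, j) M (enum_val i) j.

(* Index set Q ∪ P inside the row indices of G = [H; F B]. *)
Definition QP_set (q p : nat) (Q : {set 'I_q}) (P : {set 'I_p}) : {set 'I_(q + p)} :=
  (lshift p @: Q) :|: (@rshift q p @: P).

(* Main.v *)
Require Import Defs.
From HB Require Import structures.
From mathcomp Require Import all_boot all_order all_algebra.
From mathcomp Require Import reals zify ring lra.
Set Implicit Arguments. Unset Strict Implicit. Unset Printing Implicit Defensive.
Import Order.TTheory GRing.Theory Num.Theory.
Local Open Scope ring_scope.

Lemma castrow_mulE (R : realType) (K m c : nat) (S : {set 'I_K}) (h : #|S| = m)
  (M : 'M[R]_(K, c)) (w : 'cV[R]_c) j :
  (castmx (h, erefl c) (rowset_mx S M) *m w) j 0 =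
  (M *m w) (enum_val (cast_ord (esym h) j)) 0.
Proof. by rewrite !mxE; apply: eq_bigr => i _; rewrite castmxE !mxE cast_ord_id. Qed.

Lemma castcolE (R : realType) (K m : nat) (S : {set 'I_K}) (h : #|S| = m)
  (v : 'cV[R]_K) j :
  castmx (h, erefl 1%N) (rowset_mx S v) j 0 = v (enum_val (cast_ord (esym h) j)) 0.
Proof. by rewrite castmxE !mxE cast_ord_id. Qed.

Lemma basis_eq (R : realType) (K m : nat) (S : {set 'I_K}) (h : #|S| = m)
  (M : 'M[R]_(K, m)) (v : 'cV[R]_K) :
  castmx (h, erefl m) (rowset_mx S M) \in unitmx ->
  forall s, s \in S ->
  (M *m (invmx (castmx (h, erefl m) (rowset_mx S M)) *m castmx (h, erefl 1%N) (rowset_mx S v))) s 0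
  = v s 0.
Proof.
move=> hu s sS.
set ls := castmx (h, erefl 1%N) (rowset_mx S v).
have e : castmx (h, erefl m) (rowset_mx S M) *m (invmx (castmx (h, erefl m) (rowset_mx S M)) *m ls) = ls by rewrite mulKVmx.
move/matrixP: e => /(_ (cast_ord h (enum_rank_in sS s)) 0).
by rewrite /= castrow_mulE castcolE cast_ordK enum_rankK_in.
Qed.

Section LP.
Variables (R : realType) (m K : nat) (G : 'M[R]_(K, m)) (b : 'cV[R]_K).
Hypothesis Ginj : forall v : 'cV[R]_m, G *m v = 0 -> v = 0.

Definition feas (u : 'cV[R]_m) := forall k, (G *m u) k 0 <= b k 0.
Definition act (u : 'cV[R]_m) : {set 'I_K} := [set k | (G *m u) k 0 == b k 0].
Definition Mask (u : 'cV[R]_m) : 'M[R]_(K, m) :=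
  \matrix_(k, j) if k \in act u then G k j else 0.

Lemma row_Mask u k : row k (Mask u) = if k \in act u then row k G else 0.
Proof. by apply/rowP => j; rewrite !mxE; case: ifP => _; rewrite ?mxE. Qed.

Lemma entry_mul k (M : 'M[R]_(K, m)) (v : 'cV[R]_m) :
  (M *m v) k 0 = (row k M *m v) 0 0.
Proof. by rewrite -row_mul !mxE. Qed.

Lemma kernel_nz u : (\rank (Mask u) < m)%N ->
  exists v : 'cV[R]_m, v != 0 /\ Mask u *m v = 0.
Proof.
move=> hr.
set w := nz_row (kermx (Mask u)^T).
exists w^T; split.
  rewrite trmx_eq0 nz_row_eq0 -mxrank_eq0 mxrank_ker mxrank_tr; lia.
apply: trmx_inj; rewrite trmx_mul trmxK trmx0.
by apply/sub_kermxP; apply: nz_row_sub.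
Qed.

Lemma Gshift (u v : 'cV[R]_m) t k : (G *m (u + t *: v)) k 0 = (G *m u) k 0 + t * (G *m v) k 0.
Proof. by rewrite mulmxDr -scalemxAr [LHS]mxE [X in _ + X]mxE. Qed.

Lemma Mask_act u (v : 'cV[R]_m) k : Mask u *m v = 0 -> k \in act u -> (G *m v) k 0 = 0.
Proof.
move=> Mv ka; rewrite entry_mul; have := row_Mask u k; rewrite ka => <-.
by rewrite -entry_mul Mv mxE.
Qed.

Lemma step u : feas u -> (\rank (Mask u) < m)%N ->
  exists u', feas u' /\ (\rank (Mask u) < \rank (Mask u'))%N.
Proof.
move=> hu hr.
have [v0 [v0nz Mv0]] := kernel_nz hr.
have : exists v : 'cV[R]_m, Mask u *m v = 0 /\ exists k, 0 < (G *m v) k 0.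
  have Gnz : G *m v0 != 0 by apply: contra v0nz => /eqP/Ginj ->.
  have [k1 hk1] : exists k, (G *m v0) k 0 != 0.
    case: (pickP (fun k => (G *m v0) k 0 != 0)) => [k hk|h]; first by exists k.
    case/eqP: Gnz; apply/matrixP => i j; rewrite ord1.
    by move/negbFE: (h i) => /eqP ->; rewrite mxE.
  have [hp|hn|h0] := ltrgt0P ((G *m v0) k1 0); last by rewrite h0 eqxx in hk1.
    by exists v0; split => //; exists k1.
  exists (- v0); split; first by rewrite mulmxN Mv0 oppr0.
  by exists k1; rewrite mulmxN mxE oppr_gt0.
move=> [v [Mv [k1 Pk1]]].
pose P := fun k => 0 < (G *m v) k 0.
pose f := fun k => (b k 0 - (G *m u) k 0) / (G *m v) k 0.
have [k0 Pk0 fmin] := @arg_minP _ _ _ k1 P f Pk1.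
set t := f k0 in fmin *.
have t0 : 0 <= t by rewrite /t /f divr_ge0 ?subr_ge0 // ltW.
have t0k : t * (G *m v) k0 0 = b k0 0 - (G *m u) k0 0.
  by rewrite /t /f divfK // gt_eqF.
have hu' : feas (u + t *: v).
  move=> k; rewrite Gshift -lerBrDl.
  have [Pk|nPk] := boolP (P k).
    by rewrite -ler_pdivlMr //; apply: fmin.
  rewrite (le_trans (mulr_ge0_le0 t0 _)) ?subr_ge0 //.
  by rewrite leNgt.
exists (u + t *: v); split => //.
have k0a : k0 \in act (u + t *: v) by rewrite inE Gshift t0k addrC subrK.
have sub : (Mask u <= Mask (u + t *: v))%MS.
  apply/row_subP => k; rewrite row_Mask.
  case: ifP => ka; last by rewrite sub0mx.
  have ka' : k \in act (u + t *: v).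
    by move: (ka); rewrite !inE Gshift (Mask_act Mv ka) mulr0 addr0.
  by have := row_Mask (u + t *: v) k; rewrite ka' => <-; rewrite row_sub.
have nsub : ~~ (Mask (u + t *: v) <= Mask u)%MS.
  apply/negP => /row_subP /(_ k0); rewrite row_Mask k0a => /submxP [w hw].
  have : (row k0 G *m v) 0 0 = 0 by rewrite hw -mulmxA Mv mulmx0 mxE.
  by rewrite -entry_mul => h; move: Pk0; rewrite /P h ltxx.
by move: (ltmxErank (Mask u) (Mask (u + t *: v))); rewrite ltmxE sub nsub /= => <-.
Qed.
Lemma full u : feas u -> exists u', feas u' /\ \rank (Mask u') = m.
Proof.
move=> hu.
suff: forall k u, (m - \rank (Mask u) <= k)%N -> feas u ->
    exists u', feas u' /\ \rank (Mask u') = m.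
  by move/(_ m u); apply => //; lia.
elim=> [|k IH] {}u hk {}hu; have := rank_leq_col (Mask u) => hle.
  by exists u; split => //; lia.
have [hr|hr] := ltnP (\rank (Mask u)) m.
  have [u' [hu' hlt]] := step hu hr.
  by apply: (IH u') => //; lia.
by exists u; split => //; lia.
Qed.

Lemma basis u : feas u -> \rank (Mask u) = m ->
  exists S : {set 'I_K}, exists h : #|S| = m,
  let Gs := castmx (h, erefl m) (rowset_mx S G) in
  Gs \in unitmx /\ Gs *m u = castmx (h, erefl 1%N) (rowset_mx S b).
Proof.
move=> hu hr.
set M := Mask u. pose f := maxrankfun M.
pose S := [set k | (k \in act u) && [exists i, f i == k]].
have card_le : (#|S| <= m)%N.
  rewrite -hr -[X in (_ <= X)%N]card_ord -[X in (_ <= X)%N](card_imset _ (@maxrankfun_inj _ _ _ M)).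
  apply: subset_leq_card; apply/subsetP => k; rewrite inE => /andP [_ /existsP [i /eqP <-]].
  by rewrite imset_f.
have key : (rowsub f M <= rowset_mx S G)%MS.
  apply/row_subP => i; rewrite row_rowsub row_Mask; case: ifP => ka; last by rewrite sub0mx.
  have fiS : f i \in S by rewrite inE ka /=; apply/existsP; exists i.
  have -> : row (f i) G = row (enum_rank_in fiS (f i)) (rowset_mx S G).
    by apply/rowP => j; rewrite !mxE enum_rankK_in.
  exact: row_sub.
have rge : (m <= \rank (rowset_mx S G))%N.
  by rewrite -{1}hr -(eq_maxrowsub M) mxrankS.
have h : #|S| = m by have := rank_leq_row (rowset_mx S G); lia.
exists S, h => Gs; split.
  by rewrite -row_free_unit /row_free /Gs eqmx_cast; apply/eqP; have := rank_leq_row (rowset_mx S G); lia.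
apply/matrixP => i j; rewrite ord1 castrow_mulE castcolE.
set k := enum_val _.
have : k \in S by apply: enum_valP.
by rewrite !inE => /andP [/eqP -> _].
Qed.
End LP.

Theorem lemma2 (R : realType) (n m l N p q : nat)
  (F : 'M[R]_(p, n)) (H : 'M[R]_(q, m))
  (xs : 'I_N -> 'cV[R]_n)
  (A : 'cV[R]_l -> 'M[R]_n) (B : 'cV[R]_l -> 'M[R]_(n, m)) (delta : 'cV[R]_l) :
  (m <= n)%N ->
  C_polytope (polyset F) ->
  \rank F = n ->
  (forall x, is_vertex (polyset F) x <-> exists i, x = xs i) ->
  injective xs ->
  C_polytope (polyset H) ->
  \rank H = m ->
  let G : 'M[R]_(q + p, m) := col_mx H (F *m B delta) in
  let lv (i : 'I_N) : 'cV[R]_(q + p) :=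
    col_mx (const_mx 1) (const_mx 1 - F *m A delta *m xs i) in
  (exists (C : 'I_N -> 'M[R]_(m, l)) (d : 'I_N -> 'cV[R]_m),
     forall i, polyset H (C i *m delta + d i) /\
               polyset F (A delta *m xs i + B delta *m (C i *m delta + d i)))
  <->
  (forall i : 'I_N, exists (Q : {set 'I_q}) (P : {set 'I_p})
     (h : #|QP_set Q P| = m),
     let Gs : 'M[R]_m := castmx (h, erefl m) (rowset_mx (QP_set Q P) G) in
     let ls : 'cV[R]_m := castmx (h, erefl 1%N) (rowset_mx (QP_set Q P) (lv i)) in
     [/\ Gs \in unitmx,
         forall k : 'I_q, k \notin Q -> (row k H *m (invmx Gs *m ls)) 0 0 <= 1
       & forall k : 'I_p, k \notin P ->
           (row k (F *m B delta) *m (invmx Gs *m ls)) 0 0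
             <= 1 - (F *m A delta *m xs i) k 0]).
Proof.
move=> hmn _ _ _ _ _ hH G lv.
have Ginj : forall v : 'cV[R]_m, G *m v = 0 -> v = 0.
  move=> v; rewrite /G mul_col_mx => /eqP; rewrite col_mx_eq0 => /andP [/eqP Hv _].
  have rf : row_free H^T by rewrite /row_free mxrank_tr hH.
  apply: trmx_inj; apply: (row_free_inj rf).
  by rewrite trmx0 mul0mx -trmx_mul Hv trmx0.
have e1 (u : 'cV[R]_m) k : (G *m u) (lshift p k) 0 = (H *m u) k 0 by rewrite mul_col_mx col_mxEu.
have e2 (u : 'cV[R]_m) k : (G *m u) (rshift q k) 0 = (F *m B delta *m u) k 0 by rewrite mul_col_mx col_mxEd.
have l1 i k : lv i (lshift p k) 0 = 1 by rewrite /lv col_mxEu mxE.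
have l2 i k : lv i (rshift q k) 0 = 1 - (F *m A delta *m xs i) k 0 by rewrite /lv col_mxEd !mxE.
have cst (K' : nat) (k : 'I_K') : (const_mx 1 : 'cV[R]_K') k 0 = 1 by rewrite mxE.
have addE (a b : 'cV[R]_p) k : (a + b) k 0 = a k 0 + b k 0 by rewrite mxE.
pose P1 (u : 'cV[R]_m) := forall k : 'I_q, (H *m u) k 0 <= 1.
pose P2 i (u : 'cV[R]_m) := forall k : 'I_p, (F *m B delta *m u) k 0 <= 1 - (F *m A delta *m xs i) k 0.
have polyH (u : 'cV[R]_m) : polyset H u <-> P1 u.
  by rewrite /polyset /le_vec; split => hh k; have := hh k; rewrite cst.
have polyF i (u : 'cV[R]_m) : polyset F (A delta *m xs i + B delta *m u) <-> P2 i u.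
  rewrite /polyset /le_vec; split => hh k; have := hh k.
    by rewrite cst mulmxDr !mulmxA addE lerBrDl.
  by rewrite cst mulmxDr !mulmxA addE -lerBrDl.
have feasE i (u : 'cV[R]_m) : feas G (lv i) u <-> P1 u /\ P2 i u.
  split.
    by move=> hf; split => k; [have := hf (lshift p k); rewrite e1 l1 | have := hf (rshift q k); rewrite e2 l2].
  move=> [h1 h2] k; case: (split_ordP k) => k' ->; [rewrite e1 l1 | rewrite e2 l2]; by [apply: h1 | apply: h2].
split.
  move=> [C [d hCd]] i.
  have [hu1 hu2] := hCd i.
  have hf : feas G (lv i) (C i *m delta + d i) by apply/feasE; split; [apply/polyH | apply/polyF].
  have [u' [hu' hr]] := full Ginj hf.
  have [S [h [hGs hGu]]] := basis hu' hr.
  pose Q := [set k | lshift p k \in S].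
  pose P := [set k | rshift q k \in S].
  have eS : QP_set Q P = S.
    apply/setP => k; rewrite /QP_set inE; case: (split_ordP k) => k' ->.
      rewrite mem_imset ?inE; last exact: lshift_inj.
      by case: imsetP => [[x _ /eqP]|_]; rewrite ?orbF // eq_lrshift.
    case: imsetP => [[x _ /eqP]|_]; first by rewrite eq_rlshift.
    by rewrite mem_imset ?inE //; exact: rshift_inj.
  exists Q, P; rewrite eS; exists h => Gs ls.
  have eu : invmx Gs *m ls = u' by rewrite /ls -hGu mulKmx.
  have [hp1 hp2] := (iffLR (feasE i u')) hu'.
  split => //; rewrite eu => k _; rewrite -entry_mul //.
move=> hyp.
have hex : forall i, exists u : 'cV[R]_m, P1 u /\ P2 i u.
  move=> i; have [Q [P [h H0]]] := hyp i; move: H0; cbv zeta; case => hU hQ hP.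
  exists (invmx (castmx (h, erefl m) (rowset_mx (QP_set Q P) G)) *m
      castmx (h, erefl 1%N) (rowset_mx (QP_set Q P) (lv i))); split => k.
    case: (boolP (k \in Q)) => kQ; last by rewrite entry_mul; apply: hQ.
    have sS : lshift p k \in QP_set Q P by rewrite /QP_set inE imset_f.
    by rewrite -e1 (basis_eq (lv i) hU sS) l1.
  case: (boolP (k \in P)) => kP; last by rewrite entry_mul; apply: hP.
  have sS : rshift q k \in QP_set Q P by rewrite /QP_set inE orbC imset_f.
  by rewrite -e2 (basis_eq (lv i) hU sS) l2.
have [u hu] := fin_all_exists hex.
exists (fun _ => 0), u => i; rewrite mul0mx add0r.
have [h1 h2] := hu i; split; [exact/polyH | exact/polyF].
Qed.
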